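(* Let $m\ge 3$ and let $C_1,\dots,C_m\subset\mathbb{R}^n$ be nonempty, closed, convex sets in general position, $C=C_1\times\cdots\times C_m$, and $D(x)=\sum_{i=1}^m\|x_i-x_{i+1}\|$ with $x_{m+1}=x_1$. If $x=(x_1,\dots,x_m)\in C$ has at least one component $x_i\in\operatorname{int}(C_i)$, then there exists $\bar x=(\bar x_1,\dots,\bar x_m)$ with $\bar x_i\in\operatorname{bd}(C_i)$ for every $i=1,\dots,m$ (so in particular $\bar x\in\operatorname{bd}(C)$) such that $D(\bar x)<D(x)$.
   Context: The family of nonempty closed convex sets $C_1,\dots,C_m\subset\mathbb{R}^n$ is in general position if for every $i$, $C_i\cap K_i=\varnothing$, where $K_i=\operatorname{conv}\big(\bigcup_{j\ne i}C_j\big)$ is the convex hull of the union of the other sets. $\operatorname{int}$ and $\operatorname{bd}$ denote interior and boundary in $\mathbb{R}^n$ (resp. in $\mathbb{R}^{mn}$ for $C$). *)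

(* Defs.v *)
(* R^n is 'rV[R]_n with its canonical
   (product = Euclidean) topology; the distance used in D is the Euclidean norm. *)
From HB Require Import structures.
From mathcomp Require Import all_boot all_order all_algebra.
From mathcomp Require Import all_classical all_reals all_analysis.
Set Implicit Arguments. Unset Strict Implicit. Unset Printing Implicit Defensive.
Import Order.TTheory GRing.Theory Num.Theory.
Import numFieldNormedType.Exports.
Local Open Scope classical_set_scope.
Local Open Scope ring_scope.

Section Defs.
Variables (R : realType) (n : nat).
Notation vec := 'rV[R]_n.

Definition enorm (v : vec) : R := Num.sqrt (\sum_(k < n) (v ord0 k) ^+ 2).

Definition convex_set_R (A : set vec) : Prop :=
  forall x y t, A x -> A y -> 0 <= t -> t <= 1 -> A (t *: x + (1 - t) *: y).

Definition conv_hull (S : set vec) : set vec :=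
  [set x | forall K : set vec, convex_set_R K -> S `<=` K -> K x].

Definition bd (A : set vec) : set vec := closure A `\` interior A.

Definition general_position (m : nat) (C : 'I_m -> set vec) : Prop :=
  forall i : 'I_m,
    C i `&` conv_hull (\bigcup_(j in [set j : 'I_m | j != i]) C j) = set0.

Definition Dlen (m : nat) (x : 'I_m -> vec) : R :=
  \sum_(i < m) enorm (x i - x (ordS i)).
End Defs.

(* Main.v *)
Require Import Defs.
From HB Require Import structures.
From mathcomp Require Import all_boot all_order all_algebra.
From mathcomp Require Import all_classical all_reals all_analysis.
From mathcomp Require Import ring lra zify.
Import Order.TTheory GRing.Theory Num.Theory.
Import numFieldNormedType.Exports.
Local Open Scope classical_set_scope.
Local Open Scope ring_scope.

Section Vec.
Variables (R : realType) (n : nat).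
Notation vec := 'rV[R]_n.
Implicit Types u v w : vec.

Definition dot u v : R := \sum_(k < n) u ord0 k * v ord0 k.

Lemma enormE u : enorm u = Num.sqrt (dot u u).
Proof. by rewrite /enorm /dot; congr Num.sqrt; apply: eq_bigr => k _; rewrite expr2. Qed.

Lemma dotC u v : dot u v = dot v u.
Proof. by apply: eq_bigr => k _; rewrite mulrC. Qed.

Lemma dotDl u v w : dot (u + v) w = dot u w + dot v w.
Proof. by rewrite /dot -big_split; apply: eq_bigr => k _; rewrite mxE mulrDl. Qed.

Lemma dotZl c u v : dot (c *: u) v = c * dot u v.
Proof. by rewrite /dot mulr_sumr; apply: eq_bigr => k _; rewrite mxE mulrA. Qed.

Lemma dotDr u v w : dot w (u + v) = dot w u + dot w v.
Proof. by rewrite dotC dotDl !(dotC w). Qed.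

Lemma dotZr c u v : dot v (c *: u) = c * dot v u.
Proof. by rewrite dotC dotZl dotC. Qed.

Lemma dot_ge0 u : 0 <= dot u u.
Proof. by apply: sumr_ge0 => k _; rewrite -expr2 sqr_ge0. Qed.

Lemma dot_eq0 u : dot u u = 0 -> u = 0.
Proof.
move=> h; apply/rowP => k; rewrite mxE.
have h0 : forall j : 'I_n, predT j -> 0 <= u ord0 j * u ord0 j.
  by move=> j _; rewrite -expr2 sqr_ge0.
have := psumr_eq0P h0 h (i:=k) isT.
by move/eqP; rewrite mulf_eq0 orbb => /eqP.
Qed.

Lemma CS u v : dot u v ^+ 2 <= dot u u * dot v v.
Proof.
set A := dot u u; set B := dot u v; set V := dot v v.
have A0 : 0 <= A by apply: dot_ge0.
have [Ae|Ap] := eqVneq A 0.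
  have u0 : u = 0 by apply: dot_eq0.
  have -> : B = 0.
    by rewrite /B u0 /dot big1 // => k _; rewrite mxE mul0r.
  by rewrite Ae expr0n mul0r.
set w := A *: v + (- B) *: u.
have e : dot w w = A * (A * V - B ^+ 2).
  rewrite /w !(dotDl, dotDr, dotZl, dotZr) -/A -/V -/B (dotC v u) -/B; ring.
have := dot_ge0 w; rewrite e pmulr_rge0 ?subr_ge0 //.
by rewrite lt_neqAle eq_sym Ap A0.
Qed.

Lemma enorm_ge0 u : 0 <= enorm u.
Proof. by rewrite enormE sqrtr_ge0. Qed.

Lemma enorm_facts u v :
  let a := enorm u in let b := enorm v in let s := enorm (u + v) in
  (0 <= a /\ 0 <= b /\ 0 <= s) /\ [/\ a ^+ 2 = dot u u, b ^+ 2 = dot v v &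
      s ^+ 2 = dot u u + 2 * dot u v + dot v v].
Proof.
rewrite /= !enormE !sqr_sqrtr ?dot_ge0 // !sqrtr_ge0; split => //; split => //.
rewrite !(dotDl, dotDr) (dotC v u); ring.
Qed.

Lemma enorm_triangle u v : enorm (u + v) <= enorm u + enorm v.
Proof.
have [[a0 [b0 s0]] [ha hb hs]] := enorm_facts u v.
have cs := CS u v.
move: cs; rewrite -ha -hb => cs.
set a := enorm u in a0 ha hs cs *; set b := enorm v in b0 hb hs cs *.
set s := enorm (u + v) in s0 hs *.
set B := dot u v in hs cs *.
have hB : B <= a * b.
  have : B ^+ 2 <= (a * b) ^+ 2 by rewrite exprMn.
  have ab0 : 0 <= a * b by rewrite mulr_ge0.
  move=> h; nra.
nra.
Qed.

Lemma enorm_eq u v : enorm (u + v) = enorm u + enorm v ->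
  u = 0 \/ exists l, 0 <= l /\ v = l *: u.
Proof.
have [[a0 [b0 s0]] [ha hb hs]] := enorm_facts u v.
move=> E.
have hB : dot u v = enorm u * enorm v.
  move: hs; rewrite E -ha -hb => hs; nra.
have [Ae|Ap] := eqVneq (dot u u) 0; first by left; apply: dot_eq0.
right; exists (dot u v / dot u u); split.
  by rewrite hB divr_ge0 ?mulr_ge0 ?dot_ge0.
set A := dot u u in Ap ha hs *; set B := dot u v in hB hs *; set V := dot v v in hb hs *.
set w := A *: v + (- B) *: u.
have e : dot w w = A * (A * V - B ^+ 2).
  rewrite /w !(dotDl, dotDr, dotZl, dotZr) -/A -/V -/B (dotC v u) -/B; ring.
have e2 : A * V - B ^+ 2 = 0 by rewrite hB -ha -hb; ring.
have w0 : w = 0 by apply: dot_eq0; rewrite e e2 mulr0.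
have : A *: v = B *: u by apply/eqP; rewrite -subr_eq0 -scaleNr -/w w0.
move=> h; rewrite mulrC -scalerA -h scalerA mulVf ?scale1r //.
Qed.

Lemma bd_point (A : set vec) (x p : vec) : closed A -> A x -> ~ A p ->
  exists t : R, [/\ 0 <= t, t <= 1, bd A (x + t *: (p - x)), A (x + t *: (p - x))
                & (interior A x -> 0 < t)].
Proof.
move=> cA Ax nAp.
pose y := fun t : R => x + t *: (p - x).
have cy : continuous y.
  move=> t.
  exact: (@continuousD R _ R (fun=> x) (fun t => t *: (p - x)) t
    (@cst_continuous _ _ x t) (@scalel_continuous _ _ (p - x) t)).
pose S := `[(0:R), 1] `&` (y @^-1` A).
have S0 : S 0.
  split; first by rewrite /= in_itv /= lexx ler01.
  by rewrite /y /= scale0r addr0.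
have ub1 : ubound S 1 by move=> t [/=]; rewrite in_itv /= => /andP[_ ->].
have nS : S !=set0 by exists 0.
have hs : has_sup S by split; [exact: nS | exists 1].
pose ts := sup S.
have ts0 : 0 <= ts := sup_upper_bound hs S0.
have ts1 : ts <= 1 := ge_sup nS ub1.
have cS : closed S.
  apply: closedI; first exact: itv_closed.
  by apply: preimage_closed => // z _; exact: cy.
have Sts : S ts.
  apply: (itv_closed_supremums nS cS); split; first exact: sup_upper_bound.
  by move=> z hz; exact: ge_sup nS hz.
have Ayts : A (y ts) by case: Sts.
have nint : ~ interior A (y ts).
  move=> iA.
  have ts1' : ts < 1.
    rewrite lt_neqAle ts1 andbT; apply/negP => /eqP e; apply: nAp.
    by move: Ayts; rewrite /y e scale1r addrC subrK.
  have : nbhs ts (y @^-1` A) := cy ts _ iA.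
  move/nbhs_ballP => [e /= e0 he].
  pose mm := Num.min e (1 - ts).
  have m1 : mm <= e by rewrite ge_min lexx.
  have m2 : mm <= 1 - ts by rewrite ge_min lexx orbT.
  have m0 : 0 < mm by rewrite lt_min e0 subr_gt0.
  pose t := ts + mm / 2.
  have St : S t.
    split.
      by rewrite /= in_itv /=; apply/andP; split; rewrite /t; lra.
    apply: he; rewrite -ball_normE /ball_ /= /t opprD addrA subrr add0r normrN.
    by rewrite ger0_norm; lra.
  have := sup_upper_bound hs St; rewrite -/ts /t; lra.
exists ts; split => //.
  by split; [exact: subset_closure | exact: nint].
move=> ix; rewrite lt_neqAle ts0 andbT; apply/negP=> /eqP e; apply: nint.
by rewrite /y -e scale0r addr0.
Qed.

Lemma enormZ c u : enorm (c *: u) = `|c| * enorm u.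
Proof.
by rewrite !enormE dotZl dotZr mulrA -expr2 sqrtrM ?sqr_ge0 // sqrtr_sqr.
Qed.

Lemma enorm0 : enorm (0 : vec) = 0.
Proof. by rewrite -(scale0r (0 : vec)) enormZ normr0 mul0r. Qed.

Lemma enormB u v : enorm (u - v) = enorm (v - u).
Proof. by rewrite -opprB -scaleN1r enormZ normrN normr1 mul1r. Qed.

Lemma g_convex (a b x p : vec) (t : R) : 0 <= t -> t <= 1 ->
  enorm (a - (x + t *: (p - x))) + enorm ((x + t *: (p - x)) - b) <=
  (1 - t) * (enorm (a - x) + enorm (x - b)) + t * (enorm (a - p) + enorm (p - b)).
Proof.
move=> t0 t1.
have e1 : a - (x + t *: (p - x)) = (1 - t) *: (a - x) + t *: (a - p).
  by apply/rowP => k; rewrite !mxE; ring.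
have e2 : (x + t *: (p - x)) - b = (1 - t) *: (x - b) + t *: (p - b).
  by apply/rowP => k; rewrite !mxE; ring.
rewrite e1 e2.
have h1 := enorm_triangle ((1 - t) *: (a - x)) (t *: (a - p)).
have h2 := enorm_triangle ((1 - t) *: (x - b)) (t *: (p - b)).
move: h1 h2; rewrite !enormZ !ger0_norm ?subr_ge0 //; lra.
Qed.

Lemma g_strict (a b x : vec) :
  ~ (exists t, [/\ 0 <= t, t <= 1 & x = t *: a + (1 - t) *: b]) ->
  enorm (a - b) < enorm (a - x) + enorm (x - b).
Proof.
move=> nseg.
have := enorm_triangle (a - x) (x - b).
have -> : a - x + (x - b) = a - b by rewrite addrA subrK.
rewrite le_eqVlt => /orP[/eqP E|//]; exfalso; apply: nseg.
have E' : enorm (a - x + (x - b)) = enorm (a - x) + enorm (x - b).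
  by rewrite addrA subrK.
case: (enorm_eq _ _ E') => [h|[l [l0 h]]].
  exists 1; split => //.
  apply/rowP => k; have := congr1 (fun M : vec => M ord0 k) h; rewrite !mxE => hk.
  have -> : x ord0 k = a ord0 k by lra.
  ring.
have nz : 1 + l != 0 by rewrite gt_eqF // ltr_pwDl.
exists (l / (1 + l)); split.
- by rewrite divr_ge0 // addr_ge0.
- by rewrite ler_pdivrMr ?ltr_pwDl // mul1r lerDr.
apply/rowP => k; have := congr1 (fun M : vec => M ord0 k) h; rewrite !mxE => hk.
have E2 : (1 + l) * x ord0 k = l * a ord0 k + b ord0 k.
  by apply/eqP; rewrite -subr_eq0; apply/eqP; move: hk; rewrite mulrBr => hk; lra.
rewrite -(mulKf nz (x ord0 k)) E2; field.
by [].
Qed.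

Lemma seg_hull (S : set vec) (a b : vec) (t : R) : S a -> S b -> 0 <= t -> t <= 1 ->
  conv_hull S (t *: a + (1 - t) *: b).
Proof. by move=> Sa Sb t0 t1 K cK sub; apply: cK => //; apply: sub. Qed.
End Vec.

Section Comb.
Variables (R : realType) (n m : nat).
Notation vec := 'rV[R]_n.

Definition upd (x : 'I_m -> vec) (i : 'I_m) (z : vec) : 'I_m -> vec :=
  fun j => if j == i then z else x j.

Lemma ordS_neq (i : 'I_m) : (1 < m)%N -> ordS i != i.
Proof.
move=> m1; apply/eqP => h; have := congr1 val h => /=.
case: (ltngtP i.+1 m) => [lt|gt|e1].
- by rewrite modn_small // => /eqP; rewrite eqn_leq ltnn.
- by move=> _; have := ltn_ord i; lia.
- move=> hh; have : (i.+1 %% i.+1 = i)%N by rewrite {2}e1.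
  by rewrite modnn => i0; move: m1; rewrite -e1 -i0.
Qed.

Lemma Dlen_split (x : 'I_m -> vec) (i : 'I_m) : (1 < m)%N ->
  Dlen x = enorm (x i - x (ordS i)) + enorm (x (ord_pred i) - x i) +
    \sum_(j | (j != i) && (j != ord_pred i)) enorm (x j - x (ordS j)).
Proof.
move=> m1; have pi : ord_pred i != i.
  apply/eqP => h; have := ordS_neq (ord_pred i) m1; rewrite ord_predK h eqxx //.
rewrite /Dlen (bigD1 i) //= (bigD1 (ord_pred i)) //= ord_predK addrA.
congr (_ + _); apply: eq_bigl => j /=; rewrite ?andbT //=.
Qed.

Lemma Dlen_upd (x : 'I_m -> vec) (i : 'I_m) (z : vec) : (1 < m)%N ->
  Dlen (upd x i z) - Dlen x =
  (enorm (x (ord_pred i) - z) + enorm (z - x (ordS i))) -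
  (enorm (x (ord_pred i) - x i) + enorm (x i - x (ordS i))).
Proof.
move=> m1; have pi : ord_pred i != i.
  apply/eqP => h; have := ordS_neq (ord_pred i) m1; rewrite ord_predK h eqxx //.
rewrite !(Dlen_split _ i m1).
have -> : \sum_(j | (j != i) && (j != ord_pred i)) enorm (upd x i z j - upd x i z (ordS j))
  = \sum_(j | (j != i) && (j != ord_pred i)) enorm (x j - x (ordS j)).
  apply: eq_bigr => j /andP[ji jp]; rewrite /upd (negbTE ji).
  case: eqP => // e; exfalso; move: jp; rewrite -e ordSK eqxx //.
rewrite /upd eqxx (negbTE pi) (negbTE (ordS_neq i m1)).
set S := \sum_(j | _) _; set P := enorm (x (ord_pred i) - z); set Q := enorm (z - x (ordS i)).
set P' := enorm (x (ord_pred i) - x i); set Q' := enorm (x i - x (ordS i)).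
lra.
Qed.

Lemma upd_C (C : 'I_m -> set vec) x i z :
  (forall j, C j (x j)) -> C i z -> forall j, C j (upd x i z j).
Proof. by move=> hx hz j; rewrite /upd; case: eqP => [->|]. Qed.

Lemma step (C : 'I_m -> set vec) (x : 'I_m -> vec) (i : 'I_m) :
  (1 < m)%N -> (forall j, closed (C j)) -> general_position C ->
  (forall j, C j (x j)) ->
  exists z, [/\ bd (C i) z, C i z, Dlen (upd x i z) <= Dlen x &
     (interior (C i) (x i) -> Dlen (upd x i z) < Dlen x)].
Proof.
move=> m1 cC gp hx.
have pi : ord_pred i != i.
  apply/eqP => h; have := ordS_neq (ord_pred i) m1; rewrite ord_predK h eqxx //.
have si := ordS_neq i m1.
set a := x (ord_pred i); set b := x (ordS i).
pose H := conv_hull (\bigcup_(j in [set j : 'I_m | j != i]) C j).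
have inH : forall t, 0 <= t -> t <= 1 -> H (t *: a + (1 - t) *: b).
  move=> t t0 t1; apply: (@seg_hull R n) => //.
  - by exists (ord_pred i) => //; apply: hx.
  - by exists (ordS i) => //; apply: hx.
have notH : forall w, C i w -> ~ H w.
  move=> w Cw Hw; have := gp i; move/seteqP => [+ _] => /(_ w) h.
  by apply: h; split.
have na : ~ C i a.
  move=> Ca; apply: (notH a Ca).
  have := inH 1 ler01 (lexx _); by rewrite scale1r subrr scale0r addr0.
have [t [t0 t1 bdz Cz hpos]] := @bd_point R n _ _ _ (cC i) (hx i) na.
set z := x i + t *: (a - x i) in bdz Cz *.
exists z.
have dl := Dlen_upd x i z m1; rewrite -/a -/b in dl.
have gc := @g_convex R n a b (x i) a t t0 t1.
rewrite -/z subrr (@enorm0 R n) add0r in gc.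
have gs : enorm (a - b) < enorm (a - x i) + enorm (x i - b).
  apply: (@g_strict R n) => -[s [s0 s1 e]]; apply: (notH (x i) (hx i)); rewrite e.
  exact: inH.
move: dl gc gs hpos; set G := enorm (a - x i) + enorm (x i - b).
set Gz := enorm (a - z) + enorm (z - b).
set D1 := Dlen (upd x i z); set D0 := Dlen x.
set Gab := enorm (a - b).
move=> dl gc gs hpos.
have k1 : t * Gab <= t * G by rewrite ler_wpM2l // ltW.
split => //; first by nra.
move=> /hpos tp.
have k2 : t * Gab < t * G by rewrite ltr_pM2l.
nra.
Qed.

Lemma all_bd (C : 'I_m -> set vec) (x : 'I_m -> vec) :
  (1 < m)%N -> (forall j, closed (C j)) -> general_position C ->
  (forall j, C j (x j)) ->
  exists xb, (forall j, bd (C j) (xb j)) /\ Dlen xb <= Dlen x.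
Proof.
move=> m1 cC gp.
suff P : forall k (x : 'I_m -> vec), (forall j, C j (x j)) ->
    (forall j : 'I_m, (k <= j)%N -> bd (C j) (x j)) ->
    exists xb, (forall j, bd (C j) (xb j)) /\ Dlen xb <= Dlen x.
  by move=> hx; apply: (P m x hx) => j; rewrite leqNgt ltn_ord.
elim=> [|k IH] y hy hb.
  by exists y; split => // j; apply: hb.
case: (ltnP k m) => km.
  have [z [bz Cz le _]] := step C y (Ordinal km) m1 cC gp hy.
  have hb' : forall j : 'I_m, (k <= j)%N -> bd (C j) (upd y (Ordinal km) z j).
    move=> j kj; rewrite /upd; case: eqP => [->//|/eqP jn].
    apply: hb; rewrite ltn_neqAle kj andbT; apply/eqP => e; move: jn.
    by apply/negP; rewrite negbK; apply/eqP; apply: val_inj; rewrite /= e.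
  have [xb [hxb le2]] := IH (upd y (Ordinal km) z) (upd_C C y (Ordinal km) z hy Cz) hb'.
  by exists xb; split => //; apply: le_trans le2 le.
apply: IH => // j kj; exfalso; have := ltn_ord j; lia.
Qed.
End Comb.

Theorem mainTheorem2 (R : realType) (n m : nat) (C : 'I_m -> set 'rV[R]_n) :
  (3 <= m)%N ->
  (forall i, C i !=set0) ->
  (forall i, closed (C i)) ->
  (forall i, convex_set_R (C i)) ->
  general_position C ->
  forall x : 'I_m -> 'rV[R]_n,
    (forall i, C i (x i)) ->
    (exists i, interior (C i) (x i)) ->
    exists xb : 'I_m -> 'rV[R]_n,
      (forall i, bd (C i) (xb i)) /\ Dlen xb < Dlen x.
Proof.
move=> m3 _ cC _ gp x hx [i hi].
have m1 : (1 < m)%N by lia.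
have [z [_ Cz _ lt]] := @step R n m C x i m1 cC gp hx.
have [xb [hxb le]] := @all_bd R n m C (upd R n m x i z) m1 cC gp (@upd_C R n m C x i z hx Cz).
by exists xb; split => //; apply: le_lt_trans le (lt hi).
Qed.
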